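(* Let $I$, $\tilde I$, $h$, $h_A$ satisfy the compatibility assumption in the context, and let $\Rightarrow_t$, $\Rightarrow_e$ be as in the context with the witness set $W_{\tilde s'}$ taken to be the set of all temporal paths of $\tilde I$ from a state of $\tilde S_0$ to $\tilde s'$. Let $\tilde\pi=\tilde s_1\to\cdots\to\tilde s_n$ be a path in $\tilde I$ with temporal edges $\tilde s_k\xrightarrow{\tilde\alpha_{k+1}}\tilde s_{k+1}$ and/or epistemic edges $\tilde s_k\sim_a\tilde s_{k+1}$. Suppose there are concrete states $s_1,\dots,s_n$ with $h(s_k)=\tilde s_k$ for all $k$ such that for each temporal edge $\tau(\alpha_{k+1},s_k)=s_{k+1}$ for some $\alpha_{k+1}$ with $h_A(\alpha_{k+1})=\tilde\alpha_{k+1}$, and for each epistemic edge $l_a(s_k)=l_a(s_{k+1})$ and $s_{k+1}$ is reachable in $I$. If $s_1\in st_1\subseteq h^{-1}(\tilde s_1)$, then $(\tilde\pi,st_1)\Rightarrow^*(\tilde s_n,st_n)$ for some $st_n$ with $s_n\in st_n$; in particular $st_n\neq\emptyset$.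
   Context: $I$ and $\tilde I$ are interpreted systems over the same agents (global states $S,\tilde S$ with $l_a(s)$ the local state of agent $a$; initial states $S_0,\tilde S_0$; partial transition functions $\tau,\tilde\tau$); a state of $I$ is reachable if obtained from $S_0$ by finitely many transitions. $h:S\to\tilde S$ and $h_A:ACT\to\widetilde{ACT}$ are given functions satisfying the compatibility assumption: $h(S_0)\subseteq\tilde S_0$, and whenever $\tau(\alpha,s)$ is defined, $\tilde\tau(h_A(\alpha),h(s))=h(\tau(\alpha,s))$ (this holds for the variable-hiding abstraction of the paper). For $st\subseteq S$ let $L_a(st)=\{l_a(s)\mid s\in st\}$ and $\Theta_\alpha(st)=\{\tau(\alpha,s)\mid s\in st,\ \tau(\alpha,s)\text{ defined}\}$. Paths in $\tilde I$ are written with first edge followed by the rest: $e\,\|\,\pi$; a path of length zero is a state. Rule TemporalCheck: $(\tilde s\xrightarrow{\tilde\alpha}\tilde s'\,\|\,\pi,st)\Rightarrow_t(\pi,\bigcup_{\alpha\in h_A^{-1}(\tilde\alpha)}\Theta_\alpha(st)\cap h^{-1}(\tilde s'))$; $\Rightarrow_t^*$ is a finite sequence of such steps. Rule EpistemicCheck: given a set $W_{\tilde s'}$ of temporal paths $\pi'=\tilde s'_0\xrightarrow{\tilde\alpha'_1}\cdots\xrightarrow{\tilde\alpha'_m}\tilde s'$ with $\tilde s'_0\in\tilde S_0$, let $st'=\bigcup_{\pi'\in W_{\tilde s'}}\{X\mid(\pi',S_0\cap h^{-1}(\tilde s'_0))\Rightarrow_t^*(\tilde s',X)\}$; then $(\tilde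 s\sim_a\tilde s'\,\|\,\pi,st)\Rightarrow_e(\pi,\hat{st})$ with $\hat{st}=\{s\in st'\mid l_a(s)\in L_a(st)\}$. $\Rightarrow^*$ denotes a finite sequence of $\Rightarrow_t$ and $\Rightarrow_e$ steps. *)

(* Defs.v *)
From Stdlib Require Import List.
Import ListNotations.
Set Implicit Arguments.

Record IS (Ag : Type) := {
  St : Type;
  Act : Type;
  Loc : Type;
  loc : Ag -> St -> Loc;
  init : St -> Prop;
  tau : Act -> St -> option St
}.
Arguments St {Ag}. Arguments Act {Ag}. Arguments Loc {Ag}.
Arguments loc {Ag}. Arguments init {Ag}. Arguments tau {Ag}.

Section Defs.
Context {Ag : Type} (I J : IS Ag) (h : St I -> St J) (hA : Act I -> Act J).

Inductive reachable : St I -> Prop :=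
| reach_init s : init I s -> reachable s
| reach_step s a s' : reachable s -> tau I a s = Some s' -> reachable s'.

Definition compatible : Prop :=
  (forall s, init I s -> init J (h s)) /\
  (forall a s s', tau I a s = Some s' -> tau J (hA a) (h s) = Some (h s')).

Inductive edge : Type :=
| Temp (al : Act J) (s' : St J)
| Epi (a : Ag) (s' : St J).

Inductive abs_path : St J -> list edge -> Prop :=
| ap_nil s : abs_path s []
| ap_temp s al s' es : tau J al s = Some s' -> abs_path s' es ->
    abs_path s (Temp al s' :: es)
| ap_epi s a s' es : loc J a s = loc J a s' -> abs_path s' es ->
    abs_path s (Epi a s' :: es).

Definition temporal (es : list edge) : Prop :=
  Forall (fun e => match e with Temp _ _ => True | Epi _ _ => False end) es.

Definition edge_target (e : edge) : St J :=
  match e with Temp _ s' => s' | Epi _ s' => s' end.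
Definition path_end (s : St J) (es : list edge) : St J :=
  last (map edge_target es) s.

Definition config : Type := (St J * list edge * (St I -> Prop))%type.

(* Theta_alpha(st) restricted to preimages of s', over alpha in hA^{-1}(al) *)
Definition temp_image (al : Act J) (st : St I -> Prop) (s' : St J) : St I -> Prop :=
  fun s => (exists a s0, hA a = al /\ st s0 /\ tau I a s0 = Some s) /\ h s = s'.

Inductive tstep : config -> config -> Prop :=
| tstep_intro s al s' es st :
    tstep (s, Temp al s' :: es, st) (s', es, temp_image al st s').

Inductive tsteps : config -> config -> Prop :=
| tsteps_refl c : tsteps c c
| tsteps_step c1 c2 c3 : tstep c1 c2 -> tsteps c2 c3 -> tsteps c1 c3.

Definition epi_witness (s' : St J) : St I -> Prop :=
  fun s => exists s0' es X,
    init J s0' /\ abs_path s0' es /\ temporal es /\ path_end s0' es = s' /\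
    tsteps (s0', es, fun x => init I x /\ h x = s0') (s', [], X) /\ X s.

Inductive estep : config -> config -> Prop :=
| estep_intro s a s' es st :
    estep (s, Epi a s' :: es, st)
          (s', es, fun x => epi_witness s' x /\ exists y, st y /\ loc I a y = loc I a x).

Inductive steps : config -> config -> Prop :=
| steps_refl c : steps c c
| steps_t c1 c2 c3 : tstep c1 c2 -> steps c2 c3 -> steps c1 c3
| steps_e c1 c2 c3 : estep c1 c2 -> steps c2 c3 -> steps c1 c3.

Inductive conc_match : St I -> St J -> list edge -> St I -> Prop :=
| cm_nil s st : h s = st -> conc_match s st [] s
| cm_temp s st a al s' st' es sn :
    h s = st -> hA a = al -> tau I a s = Some s' ->
    conc_match s' st' es sn -> conc_match s st (Temp al st' :: es) sn
| cm_epi s st ag s' st' es sn :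
    h s = st -> loc I ag s = loc I ag s' -> reachable s' ->
    conc_match s' st' es sn -> conc_match s st (Epi ag st' :: es) sn.

End Defs.

(* Main.v *)
Require Import Defs.
From Stdlib Require Import List.
Import ListNotations.

Section Aux.
Context {Ag : Type} (I J : IS Ag) (h : St I -> St J) (hA : Act I -> Act J).

Lemma last_default {A : Type} : forall (x : A) l d d', last (x :: l) d = last (x :: l) d'.
Proof. intros x l; revert x; induction l as [|y l IH]; intros; simpl; auto. destruct l; auto. apply (IH y). Qed.

Lemma path_end_cons : forall (s : St J) (e : edge J) es, path_end s (e :: es) = path_end (edge_target e) es.
Proof.
  intros s e es. unfold path_end. simpl. destruct es as [|e' es]; simpl; auto.
  apply last_default.
Qed.

Lemma tsteps_snoc : forall es a st b X al c,
  tsteps h hA (a, es, st) (b, [], X) ->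
  tsteps h hA (a, es ++ [@Temp _ J al c], st) (c, [], temp_image I J h hA al X c).
Proof.
  induction es as [|e es IH]; intros a st b X al c H.
  - inversion H; subst.
    + simpl. eapply tsteps_step. constructor. constructor.
    + inversion H0.
  - inversion H; subst. inversion H0; subst.
    simpl. eapply tsteps_step. constructor. eapply IH. eassumption.
Qed.

Lemma reach_witness : compatible I J h hA -> forall s, reachable I s ->
  exists s0' es X, init J s0' /\ abs_path s0' es /\ temporal es /\
    path_end s0' es = h s /\
    tsteps h hA (s0', es, fun x => init I x /\ h x = s0') (h s, [], X) /\ X s.
Proof.
  intros [Hi Ht] s R. induction R as [s Hs | s a s' R IH Hst].
  - exists (h s), [], (fun x => init I x /\ h x = h s).
    repeat split; auto. constructor. constructor. constructor.
  - destruct IH as (s0' & es & X & H0 & Hp & Htmp & He & Hts & HX).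
    exists s0', (es ++ [@Temp _ J (hA a) (h s')]), (temp_image I J h hA (hA a) X (h s')).
    repeat split; auto.
    + clear Hts HX H0 Htmp. revert s0' Hp He. induction es as [|e es IH']; intros s0' Hp He.
      * simpl. unfold path_end in He; simpl in He; subst. econstructor. eapply Ht; eauto. constructor.
      * inversion Hp; subst; simpl.
        -- first [apply ap_temp | apply ap_epi]; [assumption|]; apply IH'; [assumption | rewrite path_end_cons in He; exact He].
        -- first [apply ap_temp | apply ap_epi]; [assumption|]; apply IH'; [assumption | rewrite path_end_cons in He; exact He].
    + unfold temporal in *. apply Forall_app. split; auto.
    + unfold path_end. rewrite map_app. simpl. rewrite last_last. reflexivity.
    + eapply tsteps_snoc; exact Hts.
    + exists a, s. auto.
Qed.
End Aux.

Theorem proposition5 (Ag : Type) (I J : IS Ag) (h : St I -> St J)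
  (hA : Act I -> Act J)
  (Hcompat : compatible I J h hA)
  (s1t : St J) (es : list (edge J))
  (Hpath : abs_path s1t es)
  (s1 sn : St I)
  (Hconc : conc_match I h hA s1 s1t es sn)
  (st1 : St I -> Prop)
  (Hs1 : st1 s1)
  (Hst1 : forall s, st1 s -> h s = s1t) :
  exists stn : St I -> Prop,
    steps h hA (s1t, es, st1) (path_end s1t es, [], stn) /\ stn sn
    /\ (exists s, stn s).
Proof.
  clear Hpath Hst1.
  revert st1 Hs1.
  induction Hconc; intros st1 Hs1.
  - exists st1. split; [constructor|]. eauto.
  - assert (Hh : h s' = st') by (inversion Hconc; auto).
    destruct (IHHconc (temp_image I J h hA al st1 st') ltac:(split; [exists a, s; auto | auto]))
      as (stn & Hs & Hn & He).
    exists stn. rewrite path_end_cons. split; auto.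
    eapply steps_t. constructor. exact Hs.
  - assert (Hh : h s' = st') by (inversion Hconc; auto).
    destruct (IHHconc (fun x => epi_witness I J h hA st' x /\ exists y, st1 y /\ loc I ag y = loc I ag x))
      as (stn & Hs & Hn & He).
    { split.
      - destruct (reach_witness I J h hA Hcompat _ H1) as (s0' & es0 & X & ?&?&?&?&?&?).
        exists s0', es0, X. subst. repeat split; auto.
      - exists s. auto. }
    exists stn. rewrite path_end_cons. split; auto.
    eapply steps_e. constructor. exact Hs.
Qed.
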